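(* For every team $R$ of three robots, the Equivalent Oscillation problem $EqOsc$ is solvable by $R$ in the model $\mathcal{FSTA}$ under the fully synchronous scheduler with limited visibility, i.e. $EqOsc\in Task(\mathcal{FSTA}, FSYNCH, \mathcal{L.V.}; R)$.
   Context: Robots are anonymous, identical, autonomous points in the Euclidean plane. Each has its own local coordinate system, with no common chirality. Robots operate in Look-Compute-Move cycles: an instantaneous snapshot of visible robot positions, a computation of a destination, then a move. In $\mathcal{FSTA}$, each robot has a persistent light with colors from a finite set, set at the end of Compute and visible only to its owner; it serves as finite internal memory, and robots are silent. Under the fully synchronous scheduler, all robots are activated in every round. Under limited visibility, a robot sees only robots within a fixed distance $V_r$ (same for all robots) of its current position, and the initial visibility graph (robots adjacent iff they see each other) is connected. Problem Equivalent Oscillation ($EqOsc$): three robots $r_1,r_2,r_3$ are initially at collinear points $B,A,C$ respectively, with $AB=AC=d$. Let $B',C'$ be the points on this line (on segments $AB$, $AC$) with $AB'=AC'=\frac{2d}{3}$. The robots $r_1$ and $r_3$ must always be equidistant from $r_2$ (which is at $A$). They must also oscillate: if at some round $t$, $r_1,r_3$ are at $B,C$, then at some round $t'>t$ they are at $B',C'$; and if at round $t'$ they are at $B',C'$, then at some round $t''>t'$ they are at $B,C$. *)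

(* Defs.v *)
From Stdlib Require Fin.
From Stdlib Require Import Reals Lra Relations.
Open Scope R_scope.

Definition point : Type := (R * R)%type.
Definition padd (p q : point) : point := (fst p + fst q, snd p + snd q).
Definition psub (p q : point) : point := (fst p - fst q, snd p - snd q).
Definition pscale (k : R) (p : point) : point := (k * fst p, k * snd p).
Definition dist (p q : point) : R :=
  sqrt ((fst p - fst q) ^ 2 + (snd p - snd q) ^ 2).
Definition collinear (p q r : point) : Prop :=
  (fst q - fst p) * (snd r - snd p) - (snd q - snd p) * (fst r - fst p) = 0.

Inductive robot : Type := r1 | r2 | r3.

(** A local coordinate system (relative to the robot's current position,
    which is its origin): a linear similarity of the plane, i.e. an
    optional reflection (chirality) followed by multiplication by the
    nonzero complex number fa + i fb (rotation + positive scaling = unit). *)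
Record frame : Type := mkFrame { fa : R; fb : R; frefl : bool }.
Definition frame_valid (f : frame) : Prop := fa f ^ 2 + fb f ^ 2 > 0.

Definition to_local (f : frame) (v : point) : point :=
  let x := fst v in
  let y := if frefl f then - snd v else snd v in
  (fa f * x - fb f * y, fb f * x + fa f * y).

Definition from_local (f : frame) (w : point) : point :=
  let n := fa f ^ 2 + fb f ^ 2 in
  let x := (fa f * fst w + fb f * snd w) / n in
  let y := (fa f * snd w - fb f * fst w) / n in
  (x, if frefl f then - y else y).

(** A snapshot: the SET of positions (in local coordinates) of the robots
    visible to the observer (including itself, at the origin).
    Robots are anonymous: no identities, no multiplicities. *)
Definition snapshot : Type := point -> Prop.

(** FSTA algorithm with colour set K: from the robot's own (persistent,
    private) light colour and the snapshot, compute the new colour and the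
    destination (in local coordinates). *)
Definition algorithm (K : Type) : Type := K -> snapshot -> (K * point).

Definition sees (Vr : R) (pos : robot -> point) (i j : robot) : Prop :=
  dist (pos i) (pos j) <= Vr.

Definition snap (Vr : R) (fr : robot -> frame) (pos : robot -> point)
  (i : robot) : snapshot :=
  fun q => exists j, sees Vr pos i j /\ q = to_local (fr i) (psub (pos j) (pos i)).

(** One fully synchronous round: every robot Looks, Computes, Moves
    (rigid moves: the destination is reached). *)
Definition step {K : Type} (alg : algorithm K) (Vr : R) (fr : robot -> frame)
  (s : (robot -> point) * (robot -> K)) : (robot -> point) * (robot -> K) :=
  let pos := fst s in
  let col := snd s in
  (fun i => padd (pos i) (from_local (fr i) (snd (alg (col i) (snap Vr fr pos i)))),
   fun i => fst (alg (col i) (snap Vr fr pos i))).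

Fixpoint exec {K : Type} (alg : algorithm K) (c0 : K) (Vr : R)
  (fr : robot -> frame) (pos0 : robot -> point) (t : nat)
  : (robot -> point) * (robot -> K) :=
  match t with
  | O => (pos0, fun _ => c0)
  | S t' => step alg Vr fr (exec alg c0 Vr fr pos0 t')
  end.

Definition vis_connected (Vr : R) (pos : robot -> point) : Prop :=
  forall i j, clos_refl_trans robot (sees Vr pos) i j.

Definition EqOsc_spec (A B C : point) (pos : nat -> robot -> point) : Prop :=
  let B' := padd A (pscale (2/3) (psub B A)) in
  let C' := padd A (pscale (2/3) (psub C A)) in
  (forall t, pos t r2 = A /\ dist (pos t r1) (pos t r2) = dist (pos t r3) (pos t r2)) /\
  (forall t, pos t r1 = B -> pos t r3 = C ->
     exists t', (t < t')%nat /\ pos t' r1 = B' /\ pos t' r3 = C') /\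
  (forall t', pos t' r1 = B' -> pos t' r3 = C' ->
     exists t'', (t' < t'')%nat /\ pos t'' r1 = B /\ pos t'' r3 = C).

(** EqOsc ∈ Task(FSTA, FSYNCH, L.V.; R) for the three-robot team R:
    one algorithm with finitely many colours (Fin.t N) and an initial colour
    works for every visibility range, every admissible initial configuration
    and every choice of local coordinate systems. *)
Definition EqOsc_solvable_FSTA_FSYNCH_LV : Prop :=
  exists (N : nat) (c0 : Fin.t N) (alg : algorithm (Fin.t N)),
    forall (Vr d : R) (A B C : point) (fr : robot -> frame),
      (forall i, frame_valid (fr i)) ->
      0 < Vr -> 0 < d ->
      collinear B A C -> B <> C ->
      dist A B = d -> dist A C = d ->
      let pos0 := fun i => match i with r1 => B | r2 => A | r3 => C end in
      vis_connected Vr pos0 ->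
      EqOsc_spec A B C (fun t => fst (exec alg c0 Vr fr pos0 t)).

(* Main.v *)
Require Import Defs.
From Stdlib Require Import Reals.
From Stdlib Require Import Lra Psatz ClassicalEpsilon.
Open Scope R_scope.

Definition Pq (S : snapshot) (q : point) : Prop :=
  q <> (0,0) /\ S q /\
  forall x, S x -> x = pscale 0 q \/ x = q \/ x = pscale 2 q.

Definition choose_dir (S : snapshot) : point :=
  match excluded_middle_informative (exists q, Pq S q) with
  | left H => proj1_sig (constructive_indefinite_description _ H)
  | right _ => (0,0)
  end.

Definition isF1 (c : Fin.t 2) : bool :=
  match c with Fin.F1 => true | _ => false end.

Definition toggle (c : Fin.t 2) : Fin.t 2 :=
  if isF1 c then Fin.FS Fin.F1 else Fin.F1.

Definition kc (c : Fin.t 2) : R := if isF1 c then 1/3 else -1/2.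

Definition myalg : algorithm (Fin.t 2) :=
  fun c S => (toggle c, pscale (kc c) (choose_dir S)).

Lemma end_dir (S : snapshot) (u : point) :
  u <> (0,0) -> S u ->
  (forall x, S x -> x = pscale 0 u \/ x = u \/ x = pscale 2 u) ->
  choose_dir S = u.
Proof.
  intros Hu Su Hx.
  unfold choose_dir.
  destruct (excluded_middle_informative _) as [H|H].
  - destruct (constructive_indefinite_description _ H) as [q [Hq [Sq Hq2]]]; simpl.
    destruct u as [ux uy]; destruct q as [qx qy].
    destruct (Hx _ Sq) as [E|[E|E]]; unfold pscale in E; simpl in E;
      injection E as E1 E2.
    + exfalso; apply Hq; f_equal; lra.
    + subst; reflexivity.
    + exfalso.
      destruct (Hq2 _ Su) as [F|[F|F]]; unfold pscale in F; simpl in F;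
        injection F as F1 F2; apply Hu; f_equal; lra.
  - exfalso; apply H; exists u; split; [|split]; auto.
Qed.

Lemma center_dir (S : snapshot) (v : point) :
  v <> (0,0) -> S v -> S (pscale (-1) v) -> choose_dir S = (0,0).
Proof.
  intros Hv Sv Sv'.
  unfold choose_dir.
  destruct (excluded_middle_informative _) as [H|H]; [|reflexivity].
  exfalso. destruct H as [q [Hq [Sq Hq2]]].
  destruct v as [vx vy]; destruct q as [qx qy].
  destruct (Hq2 _ Sv) as [E|[E|E]]; destruct (Hq2 _ Sv') as [F|[F|F]];
    unfold pscale in E, F; simpl in E, F;
    injection E as E1 E2; injection F as F1 F2;
    first [apply Hq; f_equal; lra | apply Hv; f_equal; lra].
Qed.

Lemma from_to (f : frame) (v : point) :
  frame_valid f -> from_local f (to_local f v) = v.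
Proof.
  intros Hf; unfold frame_valid in Hf.
  destruct v as [x y]; destruct f as [a b r]; simpl in *.
  unfold from_local, to_local; simpl.
  destruct r; f_equal; field; lra.
Qed.

Lemma to_local_scale (f : frame) (k : R) (v : point) :
  to_local f (pscale k v) = pscale k (to_local f v).
Proof.
  destruct v as [x y]; destruct f as [a b r].
  unfold to_local, pscale; simpl; destruct r; f_equal; ring.
Qed.

Lemma to_local_nz (f : frame) (v : point) :
  frame_valid f -> v <> (0,0) -> to_local f v <> (0,0).
Proof.
  intros Hf Hv E. apply Hv. rewrite <- (from_to f v Hf), E.
  destruct f as [a b r]; unfold from_local; simpl.
  destruct r; f_equal; unfold Rdiv; ring.
Qed.

Lemma from_zero (f : frame) (k : R) :
  from_local f (pscale k (0,0)) = (0,0).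
Proof.
  destruct f as [a b r]; unfold from_local, pscale; simpl.
  destruct r; f_equal; unfold Rdiv; ring.
Qed.
Definition cfg (A w : point) (s : R) (i : robot) : point :=
  match i with r1 => padd A (pscale s w) | r2 => A | r3 => psub A (pscale s w) end.

Ltac peq := repeat match goal with p : point |- _ => destruct p end;
  unfold cfg; unfold padd, psub, pscale; simpl; f_equal; ring.

Lemma step_cfg (Vr : R) (fr : robot -> frame) (A w : point) (s s' : R)
  (c : Fin.t 2) (pos : robot -> point) (col : robot -> Fin.t 2) :
  (forall i, frame_valid (fr i)) -> w <> (0,0) -> s <> 0 ->
  Defs.dist (padd A (pscale s w)) A <= Vr -> Defs.dist A (padd A (pscale s w)) <= Vr ->
  Defs.dist (psub A (pscale s w)) A <= Vr -> Defs.dist A (psub A (pscale s w)) <= Vr ->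
  s' = s * (1 - kc c) ->
  (forall i, pos i = cfg A w s i) -> (forall i, col i = c) ->
  (forall i, fst (step myalg Vr fr (pos, col)) i = cfg A w s' i) /\
  (forall i, snd (step myalg Vr fr (pos, col)) i = toggle c).
Proof.
  intros Hfr Hw Hs D1 D2 D3 D4 Hs' Hpos Hcol.
  split; [|intro i; simpl; rewrite Hcol; reflexivity].
  intro i; simpl; rewrite Hcol; unfold myalg; simpl.
  assert (Hsw : forall k, k <> 0 -> pscale k w <> (0,0)).
  { intros k Hk E; apply Hw; destruct w as [wx wy]; unfold pscale in E; simpl in E;
    injection E as E1 E2; f_equal.
    - destruct (Rmult_integral _ _ E1); [contradiction|auto].
    - destruct (Rmult_integral _ _ E2); [contradiction|auto]. }
  destruct i.
  -
    rewrite (end_dir _ (to_local (fr r1) (pscale (-s) w))).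
    + rewrite <- to_local_scale, from_to by auto. rewrite Hpos, Hs'. peq.
    + apply to_local_nz; auto. apply Hsw; lra.
    + exists r2; split.
      * unfold sees; rewrite !Hpos; simpl; auto.
      * rewrite !Hpos; f_equal; peq.
    + intros x [j [_ ->]]; rewrite !Hpos; destruct j; simpl.
      * left; rewrite <- to_local_scale; f_equal; peq.
      * right; left; f_equal; peq.
      * right; right; rewrite <- to_local_scale; f_equal; peq.
  -
    rewrite (center_dir _ (to_local (fr r2) (pscale s w))).
    + rewrite from_zero, Hpos; peq.
    + apply to_local_nz; auto.
    + exists r1; split.
      * unfold sees; rewrite !Hpos; simpl; auto.
      * rewrite !Hpos; f_equal; peq.
    + exists r3; split.
      * unfold sees; rewrite !Hpos; simpl; auto.
      * rewrite !Hpos, <- to_local_scale; f_equal; peq.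
  -
    rewrite (end_dir _ (to_local (fr r3) (pscale s w))).
    + rewrite <- to_local_scale, from_to by auto. rewrite Hpos, Hs'. peq.
    + apply to_local_nz; auto.
    + exists r2; split.
      * unfold sees; rewrite !Hpos; simpl; auto.
      * rewrite !Hpos; f_equal; peq.
    + intros x [j [_ ->]]; rewrite !Hpos; destruct j; simpl.
      * right; right; rewrite <- to_local_scale; f_equal; peq.
      * right; left; f_equal; peq.
      * left; rewrite <- to_local_scale; f_equal; peq.
Qed.
Lemma sq0 (a b : R) : a^2 + b^2 = 0 -> a = 0 /\ b = 0.
Proof.
  intros H. pose proof (pow2_ge_0 a). pose proof (pow2_ge_0 b).
  split; (destruct (Req_dec a 0); [|pose proof (pow_nonzero a 2 ltac:(auto))]);
  (destruct (Req_dec b 0); [|pose proof (pow_nonzero b 2 ltac:(auto))]); auto; lra.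
Qed.

Lemma mid (wx wy zx zy : R) :
  wy*zx - wx*zy = 0 -> wx^2+wy^2 = zx^2+zy^2 -> ~(zx = wx /\ zy = wy) ->
  zx = -wx /\ zy = -wy.
Proof.
  intros Hc Hn Hne.
  set (N := wx^2+wy^2). set (D := wx*zx + wy*zy).
  assert (E : (D - N) * (D + N) = 0).
  { assert (D*D + (wy*zx - wx*zy)^2 = N * (zx^2+zy^2)) by (unfold D, N; ring).
    rewrite Hc in H. rewrite <- Hn in H. fold N in H. nra. }
  destruct (Rmult_integral _ _ E) as [E1|E1].
  - exfalso; apply Hne.
    assert ((zx-wx)^2 + (zy-wy)^2 = 0) by (unfold D, N in *; nra).
    apply sq0 in H; lra.
  - assert ((zx+wx)^2 + (zy+wy)^2 = 0) by (unfold D, N in *; nra).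
    apply sq0 in H; lra.
Qed.

Lemma dist_cfg (A w : point) (s Vr : R) :
  s * s <= 1 -> sqrt (fst w ^ 2 + snd w ^ 2) <= Vr ->
  Defs.dist (padd A (pscale s w)) A <= Vr /\ Defs.dist A (padd A (pscale s w)) <= Vr /\
  Defs.dist (psub A (pscale s w)) A <= Vr /\ Defs.dist A (psub A (pscale s w)) <= Vr.
Proof.
  intros Hs Hw. destruct A as [ax ay], w as [wx wy]; simpl in *.
  unfold Defs.dist, padd, psub, pscale; simpl.
  assert (forall X, X = s*s*(wx^2+wy^2) -> sqrt X <= Vr).
  { intros X ->. eapply Rle_trans; [|exact Hw]. apply sqrt_le_1_alt.
    assert (0 <= wx^2+wy^2) by nra. nra. }
  repeat split; apply H; ring.
Qed.

Lemma even_double (t : nat) : Nat.even (t + t) = true.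
Proof.
  induction t; auto. rewrite Nat.add_succ_r. simpl. auto.
Qed.
Theorem lemma4 : EqOsc_solvable_FSTA_FSYNCH_LV.
Proof.
  exists 2%nat, Fin.F1, myalg.
  intros Vr d A B C fr Hfr HVr Hd Hcol HBC HAB HAC pos0 Hconn.
  destruct A as [ax ay], B as [bx by0], C as [cx cy].
  unfold Defs.dist in HAB, HAC; cbn [fst snd] in HAB, HAC.
  unfold collinear in Hcol; cbn [fst snd] in Hcol.
  assert (Hn : (ax-bx)^2+(ay-by0)^2 = (ax-cx)^2+(ay-cy)^2).
  { apply sqrt_inj; [| |congruence]; apply Rplus_le_le_0_compat; apply pow2_ge_0. }
  destruct (mid (bx-ax) (by0-ay) (cx-ax) (cy-ay)) as [Mx My].
  { nra. }
  { nra. }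
  { intros [E1 E2]; apply HBC; f_equal; lra. }
  assert (Ecx : cx = 2*ax-bx) by lra. assert (Ecy : cy = 2*ay-by0) by lra. subst cx cy.
  set (w := (bx - ax, by0 - ay)).
  assert (HN : sqrt (fst w ^ 2 + snd w ^ 2) = d).
  { rewrite <- HAB; simpl; f_equal; ring. }
  assert (Hw : w <> (0,0)).
  { intro E; unfold w in E; injection E as E1 E2.
    rewrite <- HAB in Hd. replace ((ax-bx)^2+(ay-by0)^2) with 0 in Hd by nra.
    rewrite sqrt_0 in Hd; lra. }
  assert (HdV : d <= Vr).
  { destruct (Rle_or_lt d Vr) as [H|H]; auto. exfalso.
    assert (Hs : forall i j, sees Vr pos0 i j -> i = j).
    { assert (Hge : forall X, X = (fst w ^2 + snd w ^ 2) \/ X = 4 * (fst w ^2 + snd w ^ 2) ->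
                 Vr < sqrt X).
      { intros X HX. apply (Rlt_le_trans _ d); [exact H|].
        rewrite <- HN. apply sqrt_le_1_alt. unfold w; cbn [fst snd].
        assert (0 <= (bx-ax)^2 + (by0-ay)^2) by (apply Rplus_le_le_0_compat; apply pow2_ge_0). destruct HX; subst; unfold w; cbn [fst snd]; lra. }
      intros i j; unfold sees, Defs.dist, pos0; destruct i, j; cbn [fst snd]; auto;
        intro Hle; exfalso;
        (match type of Hle with sqrt ?X <= _ =>
          assert (Vr < sqrt X) by (apply Hge; unfold w; cbn [fst snd]; first [left; ring | right; ring]) end);
        lra. }
    assert (Hrt : forall i j, Relation_Operators.clos_refl_trans robot (sees Vr pos0) i j -> i = j).
    { intros i j Hr; induction Hr; auto. congruence. }
    specialize (Hrt r1 r2 (Hconn r1 r2)). discriminate. }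
  assert (HD : forall s, s * s <= 1 -> _) by (intros s Hs; exact (dist_cfg (ax,ay) w s Vr Hs ltac:(lra))).
  assert (Inv : forall t,
    (forall i, fst (exec myalg Fin.F1 Vr fr pos0 t) i =
               cfg (ax,ay) w (if Nat.even t then 1 else 2/3) i) /\
    (forall i, snd (exec myalg Fin.F1 Vr fr pos0 t) i =
               if Nat.even t then Fin.F1 else Fin.FS Fin.F1)).
  { induction t.
    - simpl; split; auto. intro i; destruct i; simpl; unfold cfg; auto.
      + unfold w, padd, pscale; simpl; f_equal; ring.
      + unfold w, psub, pscale; simpl; f_equal; lra.
    - destruct IHt as [IH1 IH2]. simpl exec.
      destruct (exec myalg Fin.F1 Vr fr pos0 t) as [p col]. simpl in IH1, IH2.
      rewrite Nat.even_succ, <- Nat.negb_even.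
      destruct (Nat.even t); simpl.
      + destruct (HD 1 ltac:(lra)) as [D1 [D2 [D3 D4]]].
        apply (step_cfg Vr fr (ax,ay) w 1 (2/3) Fin.F1 p col); auto; try lra.
        unfold kc; simpl; field.
      + destruct (HD (2/3) ltac:(lra)) as [D1 [D2 [D3 D4]]].
        apply (step_cfg Vr fr (ax,ay) w (2/3) 1 (Fin.FS Fin.F1) p col); auto; try lra.
        unfold kc; simpl; field. }
  split; [|split].
  - intro t. destruct (Inv t) as [I1 _]. rewrite !I1. simpl. split; auto.
    unfold Defs.dist, padd, psub, pscale; simpl. f_equal. ring.
  - intros t _ _. exists (S (t + t)). split; [lia|].
    destruct (Inv (S (t+t))) as [I1 _]. rewrite !I1, Nat.even_succ, <- Nat.negb_even, even_double.
    simpl. unfold padd, psub, pscale; simpl. split; f_equal; lra.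
  - intros t _ _. exists (S (S (t + t))). split; [lia|].
    destruct (Inv (S (S (t+t)))) as [I1 _]. rewrite !I1.
    replace (Nat.even (S (S (t + t)))) with true by (simpl; rewrite even_double; auto).
    simpl. unfold padd, psub, pscale; simpl. split; f_equal; lra.
Qed.
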